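(* Let $(\Omega,\mathcal{F})$ be a measurable space, $\mathcal{P}$ a nonempty set of probability measures on it, $\hat{\mathbb{E}}[Z]=\sup_{P\in\mathcal{P}}E_P[Z]$, and let $X,Y$ be random variables with $\hat{\mathbb{E}}[X^2]+\hat{\mathbb{E}}[Y^2]<\infty$. Put $U=\frac{X+Y}{2}$ and $V=\frac{X-Y}{2}$. Then $$\max_{\beta\in\mathbb{R}}\min_{\alpha\in\mathbb{R}}\hat{\mathbb{E}}[(U-\alpha)^2-(V-\beta)^2]=\max_{\beta\in M_V}\min_{\alpha\in M_U}\hat{\mathbb{E}}[(U-\alpha)^2-(V-\beta)^2],$$ $$\min_{\alpha\in\mathbb{R}}\max_{\beta\in\mathbb{R}}\left(-\hat{\mathbb{E}}[-(U-\alpha)^2+(V-\beta)^2]\right)=\min_{\alpha\in M_U}\max_{\beta\in M_V}\left(-\hat{\mathbb{E}}[-(U-\alpha)^2+(V-\beta)^2]\right).$$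
   Context: For a random variable $W$ with $\hat{\mathbb{E}}[W^2]<\infty$: $\overline{\mu}_W=\hat{\mathbb{E}}[W]$, $\underline{\mu}_W=-\hat{\mathbb{E}}[-W]$, and $M_W=[\underline{\mu}_W,\overline{\mu}_W]$. *)

(* Defs.v *)
From HB Require Import structures.
From mathcomp Require Import all_boot all_order all_algebra.
From mathcomp Require Import all_classical all_reals all_analysis.
Set Implicit Arguments. Unset Strict Implicit. Unset Printing Implicit Defensive.
Import Order.TTheory GRing.Theory Num.Theory.
Local Open Scope classical_set_scope.
Local Open Scope ring_scope.

Definition Ehat d (T : measurableType d) (R : realType)
  (PP : set (probability T R)) (Z : T -> R) : \bar R :=
  ereal_sup [set ('E_p[Z])%E | p in PP].

Definition Mset d (T : measurableType d) (R : realType)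
  (PP : set (probability T R)) (W : T -> R) : set R :=
  [set a : R | (- Ehat PP (fun w => (- W w)%R) <= a%:E)%E /\ (a%:E <= Ehat PP W)%E].

Definition is_min_on (R : realType) (A : set R) (f : R -> \bar R) (m : \bar R) :=
  (exists2 a, A a & f a = m) /\ (forall a, A a -> (m <= f a)%E).

Definition is_max_on (R : realType) (A : set R) (f : R -> \bar R) (m : \bar R) :=
  (exists2 a, A a & f a = m) /\ (forall a, A a -> (f a <= m)%E).

Definition is_maxmin (R : realType) (B A : set R) (F : R -> R -> \bar R) (v : \bar R) :=
  exists g : R -> \bar R,
    (forall b, B b -> is_min_on A (fun a => F a b) (g b)) /\ is_max_on B g v.

Definition is_minmax (R : realType) (A B : set R) (F : R -> R -> \bar R) (v : \bar R) :=
  exists g : R -> \bar R,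
    (forall a, A a -> is_max_on B (fun b => F a b) (g a)) /\ is_min_on A g v.

(* Main.v *)
Require Import Defs.
From HB Require Import structures.
From mathcomp Require Import all_boot all_order all_algebra.
From mathcomp Require Import all_classical all_reals all_analysis.
From mathcomp Require Import ring lra measurable_realfun.
Import Order.TTheory GRing.Theory Num.Theory.
Import numFieldNormedType.Exports.
Local Open Scope classical_set_scope.
Local Open Scope ring_scope.
Set Implicit Arguments. Unset Strict Implicit.
Lemma lip_cont (R : realType) (f : R -> R) (L : R) :
  (forall x y, `|f x - f y| <= L * `|x - y|) -> continuous f.
Proof.
move=> H x; apply/cvgrPdist_le => e e0.
have L1 : 0 < `|L| + 1 by rewrite ltr_wpDl.
exists (e / (`|L| + 1)); first by rewrite /= divr_gt0.
move=> y /=; rewrite /ball /= => hy.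
apply: (le_trans (H x y)).
have h1 : L * `|x - y| <= `|L| * `|x - y| by rewrite ler_wpM2r // ler_norm.
apply: (le_trans h1).
have h2 : `|x - y| <= e / (`|L| + 1) by apply: ltW.
rewrite ler_pdivlMr // in h2.
have : 0 <= `|L| by [].
have : 0 <= `|x - y| by [].
nra.
Qed.

Lemma sup_real (R : realType) (I : Type) (S : set I) (f : I -> R) (B : R) (i0 : I) :
  S i0 -> (forall i, S i -> f i <= B) ->
  ereal_sup [set (f i)%:E | i in S] = (fine (ereal_sup [set (f i)%:E | i in S]))%:E /\
  (forall i, S i -> f i <= fine (ereal_sup [set (f i)%:E | i in S])) /\
  (forall x, (forall i, S i -> f i <= x) -> fine (ereal_sup [set (f i)%:E | i in S]) <= x).
Proof.
move=> Si0 hB.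
set E := ereal_sup _.
have ub i : S i -> ((f i)%:E <= E)%E by move=> Si; apply: ereal_sup_ubound; exists i.
have lst x : (forall i, S i -> f i <= x) -> (E <= x%:E)%E.
  by move=> hx; apply: ge_ereal_sup => _ [i Si <-]; rewrite lee_fin hx.
have Efin : E \is a fin_num.
  rewrite fin_numE; apply/andP; split.
    by apply/negP => /eqP E0; have := ub _ Si0; rewrite E0.
  by apply/negP => /eqP E0; have := lst _ hB; rewrite E0.
have EE : E = (fine E)%:E by rewrite fineK.
split => //; split.
  by move=> i Si; rewrite -lee_fin -EE ub.
by move=> x hx; rewrite -lee_fin -EE lst.
Qed.

Lemma interval_of (R : realType) (I : Type) (S : set I) (m : I -> R) (K : R) (i0 : I) :
  S i0 -> (forall i, S i -> `|m i| <= K) ->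
  exists l u, [/\ l <= u, -K <= l, u <= K, (forall i, S i -> l <= m i <= u) &
    (forall a, ((- ereal_sup [set (- m i)%:E | i in S] <= a%:E)%E /\
                (a%:E <= ereal_sup [set (m i)%:E | i in S])%E) <-> l <= a <= u)].
Proof.
move=> Si0 hm.
have hm' i : S i -> -K <= m i <= K by move=> Si; rewrite -ler_norml hm.
have [E1 [ub1 ls1]] := @sup_real _ _ _ m K _ Si0 (fun i Si => proj2 (andP (hm' i Si))).
have [E2 [ub2 ls2]] := @sup_real _ _ _ (fun i => - m i) K _ Si0
  (fun i Si => ltac:(have := hm' i Si; move=> /andP[h _]; lra)).
set u := fine _ in E1 ub1 ls1.
set l' := fine _ in E2 ub2 ls2.
exists (- l'), u; split.
- have := ub1 _ Si0; have := ub2 _ Si0; lra.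
- have := ls2 K (fun i Si => ltac:(have := hm' i Si; move=> /andP[h _]; lra)); lra.
- by apply: ls1 => i Si; have := hm' i Si; move=> /andP[_ h].
- by move=> i Si; have := ub1 _ Si; have := ub2 _ Si; move=> h1 h2; apply/andP; split; lra.
- move=> a; rewrite E1 E2 !lee_fin; split.
    by move=> [h1 h2]; apply/andP; split; lra.
  by move=> /andP[h1 h2]; split; lra.
Qed.

Definition clamp (R : realType) (l u a : R) : R :=
  if a < l then l else if u < a then u else a.
Arguments clamp {R}.

Lemma clamp_in (R : realType) (l u a : R) : l <= u -> l <= clamp l u a <= u.
Proof.
rewrite /clamp => lu; case: ifP => h1; first by rewrite lexx lu.
case: ifP => h2; first by rewrite lexx lu.
by apply/andP; split; rewrite leNgt ?h1 ?h2.
Qed.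

Lemma clampK (R : realType) (l u a : R) : l <= a <= u -> clamp l u a = a.
Proof.
move=> /andP[h1 h2]; rewrite /clamp ltNge h1 /= ltNge h2 //.
Qed.

Lemma clamp_cases (R : realType) (l u a : R) :
  (a < l /\ clamp l u a = l) \/ (l <= a /\ u < a /\ clamp l u a = u) \/
  (l <= a /\ a <= u /\ clamp l u a = a).
Proof.
rewrite /clamp; case: ifP => h1; first by left.
case: ifP => h2; right; first by left; rewrite leNgt h1.
by right; rewrite !leNgt h1 h2.
Qed.

Lemma clamp_lip (R : realType) (l u x y : R) : l <= u ->
  `|clamp l u x - clamp l u y| <= `|x - y|.
Proof.
move=> lu.
have h1 := ler_norm (x - y).
have h2 : y - x <= `|x - y| by rewrite distrC ler_norm.
rewrite ler_norml.
case: (@clamp_cases _ l u x) => [[a1 a2]|[[a0 [a1 a2]]|[a0 [a1 a2]]]];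
case: (@clamp_cases _ l u y) => [[b1 b2]|[[b0 [b1 b2]]|[b0 [b1 b2]]]];
rewrite a2 b2; apply/andP; split; lra.
Qed.

Lemma clamp_aux (R : realType) (l u a z : R) : l <= z <= u ->
  (clamp l u a - a) * (clamp l u a + a - 2 * z) <= 0.
Proof.
move=> /andP[z1 z2].
case: (@clamp_cases _ l u a) => [[a1 a2]|[[a0 [a1 a2]]|[a0 [a1 a2]]]]; rewrite a2.
- have h : 0 <= (l - a) * (2 * z - l - a) by apply: mulr_ge0; lra.
  nra.
- have h : 0 <= (a - u) * (u + a - 2 * z) by apply: mulr_ge0; lra.
  nra.
- by rewrite subrr mul0r.
Qed.

Lemma lip_aux (R : realType) (x y z K : R) : -K <= x <= K -> -K <= y <= K -> -K <= z <= K ->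
  (x - y) * (x + y - 2 * z) <= 4 * K * `|x - y|.
Proof.
move=> /andP[x1 x2] /andP[y1 y2] /andP[z1 z2].
case: (lerP y x) => h.
- idtac.
  have : 0 <= (x - y) * (4 * K - (x + y - 2 * z)) by apply: mulr_ge0; lra.
  nra.
- idtac.
  have : 0 <= (y - x) * (4 * K + (x + y - 2 * z)) by apply: mulr_ge0; lra.
  nra.
Qed.

Lemma core (R : realType) (I : Type) (S : set I) (m n c : I -> R) (K : R) (i0 : I) :
  S i0 -> (forall i, S i -> `|m i| <= K) -> (forall i, S i -> `|n i| <= K) ->
  (forall i, S i -> c i <= K) ->
  exists v,
    is_maxmin setT setT
      (fun a b => ereal_sup [set (c i + a ^+ 2 - b ^+ 2 - 2 * a * m i + 2 * b * n i)%:E | i in S]) v /\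
    is_maxmin
      [set b : R | (- ereal_sup [set (- n i)%:E | i in S] <= b%:E)%E /\
                   (b%:E <= ereal_sup [set (n i)%:E | i in S])%E]
      [set a : R | (- ereal_sup [set (- m i)%:E | i in S] <= a%:E)%E /\
                   (a%:E <= ereal_sup [set (m i)%:E | i in S])%E]
      (fun a b => ereal_sup [set (c i + a ^+ 2 - b ^+ 2 - 2 * a * m i + 2 * b * n i)%:E | i in S]) v.
Proof.
move=> Si0 hm hn hc.
have K0 : 0 <= K := le_trans (normr_ge0 _) (hm _ Si0).
have hm' i : S i -> -K <= m i <= K by move=> Si; rewrite -ler_norml hm.
have hn' i : S i -> -K <= n i <= K by move=> Si; rewrite -ler_norml hn.
have [lU [uU [lu1 lu2 lu3 lu4 lu5]]] := interval_of Si0 hm.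
have [lV [uV [lv1 lv2 lv3 lv4 lv5]]] := interval_of Si0 hn.
pose ph i a b := c i + a ^+ 2 - b ^+ 2 - 2 * a * m i + 2 * b * n i.
pose Fr a b := ereal_sup [set (ph i a b)%:E | i in S].
pose MU := [set a : R | (- ereal_sup [set (- m i)%:E | i in S] <= a%:E)%E /\
                   (a%:E <= ereal_sup [set (m i)%:E | i in S])%E].
pose MV := [set b : R | (- ereal_sup [set (- n i)%:E | i in S] <= b%:E)%E /\
                   (b%:E <= ereal_sup [set (n i)%:E | i in S])%E].
change (exists v, is_maxmin setT setT Fr v /\ is_maxmin MV MU Fr v).
have phB a b i : S i -> ph i a b <= K + 2 * a ^+ 2 + b ^+ 2 + 2 * K ^+ 2.
  move=> Si; have := hm' i Si; have := hn' i Si; have := hc i Si.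
  move=> h1 /andP[h2 h3] /andP[h4 h5]; rewrite /ph.
  have : 0 <= (K - m i) * (K + m i) by apply: mulr_ge0; lra.
  have : 0 <= (K - n i) * (K + n i) by apply: mulr_ge0; lra.
  have : 0 <= (a + m i) ^+ 2 by apply: sqr_ge0.
  have : 0 <= (b - n i) ^+ 2 by apply: sqr_ge0.
  nra.
pose fr a b := fine (Fr a b).
have frP a b := @sup_real _ _ _ (fun i => ph i a b) _ _ Si0 (phB a b).
have frE a b : Fr a b = (fr a b)%:E by case: (frP a b).
have frub a b i : S i -> ph i a b <= fr a b by case: (frP a b) => _ [h _]; apply: h.
have frls a b x : (forall i, S i -> ph i a b <= x) -> fr a b <= x.
  by case: (frP a b) => _ [_ h]; apply: h.
have frcmp a b a' b' d : (forall i, S i -> ph i a b <= ph i a' b' + d) ->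
    fr a b <= fr a' b' + d.
  move=> h; apply: frls => i Si; apply: le_trans (h i Si) _.
  by rewrite lerD2r; apply: frub.
have clA a b : fr (clamp lU uU a) b <= fr a b.
  rewrite -[fr a b]addr0; apply: frcmp => i Si.
  have := clamp_aux a (lu4 i Si); rewrite /ph; nra.
have clB a b : fr a b <= fr a (clamp lV uV b).
  rewrite -[fr a (clamp _ _ _)]addr0; apply: frcmp => i Si.
  have := clamp_aux b (lv4 i Si); rewrite /ph; nra.
have lipA a a' b : lU <= a <= uU -> lU <= a' <= uU ->
    fr a b <= fr a' b + 4 * K * `|a - a'|.
  move=> ha ha'; apply: frcmp => i Si.
  have /andP[h1 h2] := ha; have /andP[h3 h4] := ha'.
  have := @lip_aux R a a' (m i) K ltac:(apply/andP; split; lra)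
    ltac:(apply/andP; split; lra) (hm' i Si).
  rewrite /ph; nra.
have lipB a b b' : lV <= b <= uV -> lV <= b' <= uV ->
    fr a b <= fr a b' + 4 * K * `|b - b'|.
  move=> hb hb'; apply: frcmp => i Si.
  have /andP[h1 h2] := hb; have /andP[h3 h4] := hb'.
  have := @lip_aux R b' b (n i) K ltac:(apply/andP; split; lra)
    ltac:(apply/andP; split; lra) (hn' i Si).
  rewrite distrC /ph; nra.
have hmin b : exists a, lU <= a <= uU /\ forall t, fr a b <= fr t b.
  have cont : continuous (fun x => fr (clamp lU uU x) b).
    apply: (@lip_cont _ _ (4 * K)) => x y.
    have := clamp_lip x y lu1; have := clamp_lip y x lu1.
    have := lipA _ _ b (clamp_in x lu1) (clamp_in y lu1).
    have := lipA _ _ b (clamp_in y lu1) (clamp_in x lu1).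
    rewrite (distrC (clamp _ _ y)) (distrC y) => h1 h2 h3 h4.
    have h5 : 4 * K * `|clamp lU uU x - clamp lU uU y| <= 4 * K * `|x - y|.
      by rewrite ler_wpM2l // mulr_ge0.
    rewrite ler_norml; apply/andP; split; lra.
  have [a ain amin] := EVT_min lu1 (continuous_subspaceT cont).
  move: ain; rewrite in_itv /= => ain.
  exists a; split => // t.
  have := amin (clamp lU uU t); rewrite in_itv /= clamp_in // => /(_ isT).
  rewrite (clampK ain) (clampK (clamp_in t lu1)) => h.
  exact: le_trans h (clA t b).
have [ab hab] := choice hmin.
pose gr b := fr (ab b) b.
have lipG b b' : lV <= b <= uV -> lV <= b' <= uV -> gr b <= gr b' + 4 * K * `|b - b'|.
  move=> hb hb'; rewrite /gr.
  apply: le_trans (lipB (ab b') _ _ hb hb').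
  exact: (proj2 (hab b)).
have contG : continuous (fun y => gr (clamp lV uV y)).
  apply: (@lip_cont _ _ (4 * K)) => x y.
  have := clamp_lip x y lv1.
  have := lipG _ _ (clamp_in x lv1) (clamp_in y lv1).
  have := lipG _ _ (clamp_in y lv1) (clamp_in x lv1).
  rewrite (distrC (clamp _ _ y)) => h1 h2 h3.
  have h5 : 4 * K * `|clamp lV uV x - clamp lV uV y| <= 4 * K * `|x - y|.
    by rewrite ler_wpM2l // mulr_ge0.
  rewrite ler_norml; apply/andP; split; lra.
have [bs bsin bsmax] := EVT_max lv1 (continuous_subspaceT contG).
move: bsin; rewrite in_itv /= => bsin.
have gmax b : gr b <= gr bs.
  have h1 : gr b <= fr (ab (clamp lV uV b)) b by exact: (proj2 (hab b)).
  have h2 := clB (ab (clamp lV uV b)) b.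
  have := bsmax (clamp lV uV b); rewrite in_itv /= clamp_in // => /(_ isT).
  rewrite (clampK bsin) (clampK (clamp_in b lv1)) => h3.
  rewrite /gr in h1 h3 *; lra.
have gmin b a : gr b <= fr a b by exact: (proj2 (hab b)).
exists (gr bs)%:E; split; exists (fun b => (gr b)%:E); split.
- move=> b _; split; first by exists (ab b) => //=; rewrite frE.
  by move=> a _ /=; rewrite frE lee_fin.
- split; first by exists bs.
  by move=> b _; rewrite lee_fin.
- move=> b _; split.
    by exists (ab b); [apply/lu5; exact: (proj1 (hab b)) | rewrite /= frE].
  by move=> a _ /=; rewrite frE lee_fin.
- split; first by exists bs => //; apply/lv5.
  by move=> b _; rewrite lee_fin.
Qed.

Lemma sq_lfun d (T : measurableType d) (R : realType) (p : probability T R) (W : T -> R) :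
  measurable_fun setT W -> ('E_p[fun w => (W w ^+ 2)%R] < +oo)%E ->
  (fun w => W w ^+ 2) \in Lfun p 1 /\ W \in Lfun p 1.
Proof.
move=> mW hW.
have i2 : p.-integrable setT (EFin \o (fun w => W w ^+ 2)).
  apply/integrableP; split.
    by apply/measurable_EFinP; exact: measurable_funX.
  rewrite (eq_integral (fun x => ((W x) ^+ 2)%:E)); last first.
    by move=> x _ /=; rewrite ger0_norm // sqr_ge0.
  by move: hW; rewrite unlock.
have l2 : (fun w => W w ^+ 2) \in Lfun p 1 by apply/Lfun1_integrable.
split => //.
apply/Lfun1_integrable.
have l3 : (fun w => W w ^+ 2) \+ cst 1 \in Lfun p 1 by apply: rpredD => //; exact: Lfun_cst.
move/Lfun1_integrable: l3 => ig.
apply: le_integrable ig => //.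
  by apply/measurable_EFinP.
move=> x _; rewrite /= lee_fin.
have h1 := normr_ge0 (W x).
have h2 : `|W x| ^+ 2 = W x ^+ 2 by rewrite real_normK // num_real.
rewrite [X in _ <= X]ger0_norm; last by have := sqr_ge0 (W x); lra.
nra.
Qed.

Lemma sq_formula d (T : measurableType d) (R : realType) (p : probability T R) (W : T -> R) (a : R) :
  measurable_fun setT W -> ('E_p[fun w => (W w ^+ 2)%R] < +oo)%E ->
  (fun w => (W w - a) ^+ 2) \in Lfun p 1 /\
  ('E_p[fun w => ((W w - a) ^+ 2)%R] =
    (fine 'E_p[fun w => (W w ^+ 2)%R] - 2 * a * fine 'E_p[W] + a ^+ 2)%:E)%E.
Proof.
move=> mW hW; have [l2 l1] := sq_lfun mW hW.
have e : (fun w => (W w - a) ^+ 2) =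
    ((fun w => W w ^+ 2) \+ ((-2 * a) \o* W)) \+ cst (a ^+ 2).
  by apply/funext => w /=; rewrite /GRing.mulr_fun /=; ring.
have l3 : (-2 * a) \o* W \in Lfun p 1 by apply: Lfun_scale.
have l4 : cst (a ^+ 2) \in Lfun p 1 by exact: Lfun_cst.
split; first by rewrite e; apply: rpredD => //; apply: rpredD.
rewrite e expectationD ?rpredD // expectationD // expectationZl // expectation_cst.
have E2 : ('E_p[fun w => (W w ^+ 2)%R] = (fine 'E_p[fun w => (W w ^+ 2)%R])%:E)%E.
  by rewrite fineK // expectation_fin_num.
have E1 : ('E_p[W] = (fine 'E_p[W])%:E)%E by rewrite fineK // expectation_fin_num.
rewrite {1}E2 {1}E1 -EFinM -!EFinD; congr EFin; ring.
Qed.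

Lemma gen d (T : measurableType d) (R : realType) (PP : set (probability T R))
  (U V : T -> R) (K : R) :
  PP !=set0 -> measurable_fun setT U -> measurable_fun setT V ->
  (forall p, PP p -> ('E_p[fun w => (U w ^+ 2)%R] <= K%:E)%E) ->
  (forall p, PP p -> ('E_p[fun w => (V w ^+ 2)%R] <= K%:E)%E) ->
  exists v,
    is_maxmin setT setT (fun a b => Ehat PP (fun w => (U w - a) ^+ 2 - (V w - b) ^+ 2)) v /\
    is_maxmin (Mset PP V) (Mset PP U)
      (fun a b => Ehat PP (fun w => (U w - a) ^+ 2 - (V w - b) ^+ 2)) v.
Proof.
move=> [p0 Pp0] mU mV hU hV.
have fU p : PP p -> ('E_p[fun w => (U w ^+ 2)%R] < +oo)%E.
  by move=> Pp; apply: le_lt_trans (hU p Pp) (ltry K).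
have fV p : PP p -> ('E_p[fun w => (V w ^+ 2)%R] < +oo)%E.
  by move=> Pp; apply: le_lt_trans (hV p Pp) (ltry K).
pose sU p := fine 'E_p[fun w => (U w ^+ 2)%R].
pose sV p := fine 'E_p[fun w => (V w ^+ 2)%R].
pose mUf p := fine 'E_p[U].
pose mVf p := fine 'E_p[V].
have formU p a : PP p -> (fun w => (U w - a) ^+ 2) \in Lfun p 1 /\
    ('E_p[fun w => ((U w - a) ^+ 2)%R] = (sU p - 2 * a * mUf p + a ^+ 2)%:E)%E.
  by move=> Pp; apply: sq_formula => //; apply: fU.
have formV p a : PP p -> (fun w => (V w - a) ^+ 2) \in Lfun p 1 /\
    ('E_p[fun w => ((V w - a) ^+ 2)%R] = (sV p - 2 * a * mVf p + a ^+ 2)%:E)%E.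
  by move=> Pp; apply: sq_formula => //; apply: fV.
have EW (W : T -> R) p : measurable_fun setT W -> ('E_p[fun w => (W w ^+ 2)%R] < +oo)%E ->
    ('E_p[W] = (fine 'E_p[W])%:E)%E /\
    ('E_p[fun w => (- W w)%R] = (- fine 'E_p[W])%:E)%E.
  move=> mW hW; have [_ l1] := sq_lfun mW hW.
  have E1 : ('E_p[W] = (fine 'E_p[W])%:E)%E by rewrite fineK // expectation_fin_num.
  split => //.
  have h := @expectationZl _ _ _ p W (-1) l1.
  have e : ((-1) \o* W) = (fun w => - W w).
    by apply/funext => w; rewrite /GRing.mulr_fun /= mulrN1.
  by rewrite e in h; rewrite h E1 -EFinM mulN1r.
have sq_ge0 (W : T -> R) p : (0 <= fine 'E_p[fun w => (W w ^+ 2)%R])%R.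
  by apply: fine_ge0; apply: expectation_ge0 => x; apply: sqr_ge0.
have sq_le (W : T -> R) p : ('E_p[fun w => (W w ^+ 2)%R] <= K%:E)%E ->
    (fine 'E_p[fun w => (W w ^+ 2)%R] <= K)%R.
  move=> h; have h0 : (0 <= 'E_p[fun w => (W w ^+ 2)%R])%E.
    by apply: expectation_ge0 => x; apply: sqr_ge0.
  by rewrite -lee_fin fineK // ge0_fin_numE // (le_lt_trans h (ltry K)).
have K0 : 0 <= K by apply: le_trans (sq_ge0 U p0) (sq_le U p0 (hU p0 Pp0)).
have mbound (W : T -> R) p : measurable_fun setT W ->
    ('E_p[fun w => (W w ^+ 2)%R] <= K%:E)%E -> `|fine 'E_p[W]| <= K + 1.
  move=> mW hW.
  have hW' : ('E_p[fun w => (W w ^+ 2)%R] < +oo)%E by apply: le_lt_trans hW (ltry K).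
  have [_ e1] := sq_formula 1 mW hW'.
  have [_ e2] := sq_formula (-1) mW hW'.
  have g1 : (0 <= 'E_p[fun w => ((W w - 1) ^+ 2)%R])%E.
    by apply: expectation_ge0 => x; apply: sqr_ge0.
  have g2 : (0 <= 'E_p[fun w => ((W w - -1) ^+ 2)%R])%E.
    by apply: expectation_ge0 => x; apply: sqr_ge0.
  rewrite e1 lee_fin in g1; rewrite e2 lee_fin in g2.
  have := sq_le W p hW; have := sq_ge0 W p.
  rewrite ler_norml => h1 h2; apply/andP; split; lra.
have eF : (fun a b => Ehat PP (fun w => (U w - a) ^+ 2 - (V w - b) ^+ 2)) =
    (fun a b => ereal_sup [set ((sU p - sV p) + a ^+ 2 - b ^+ 2 - 2 * a * mUf p
        + 2 * b * mVf p)%:E | p in PP]).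
  apply/funext => a; apply/funext => b; rewrite /Ehat; congr ereal_sup.
  apply: eq_imagel => p Pp.
  have [lu eu] := formU p a Pp; have [lv ev] := formV p b Pp.
  rewrite (_ : (fun w => (U w - a) ^+ 2 - (V w - b) ^+ 2) =
     (fun w => (U w - a) ^+ 2) \- (fun w => (V w - b) ^+ 2)) //.
  rewrite expectationB // eu ev -EFinB; congr EFin; ring.
have eM (W : T -> R) : measurable_fun setT W ->
    (forall p, PP p -> ('E_p[fun w => (W w ^+ 2)%R] < +oo)%E) ->
    Mset PP W = [set a : R | (- ereal_sup [set (- fine ('E_p[W])%E)%:E | p in PP] <= a%:E)%E /\
                   (a%:E <= ereal_sup [set (fine ('E_p[W])%E)%:E | p in PP])%E].
  move=> mW hW; rewrite /Mset /Ehat.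
  rewrite (eq_imagel (f' := fun p => (- fine ('E_p[W])%E)%:E)); last first.
    by move=> p Pp; case: (EW W p mW (hW p Pp)).
  rewrite (eq_imagel (A := PP) (f := fun p => ('E_p[W])%E) (f' := fun p => (fine ('E_p[W])%E)%:E)) //.
  by move=> p Pp; case: (EW W p mW (hW p Pp)).
rewrite eF (eM U mU fU) (eM V mV fV).
apply: (@core _ _ PP mUf mVf (fun p => sU p - sV p) (K + 1) p0 Pp0).
- by move=> p Pp; apply: mbound => //; apply: hU.
- by move=> p Pp; apply: mbound => //; apply: hV.
- move=> p Pp; have := sq_le U p (hU p Pp); have := sq_ge0 V p.
  rewrite /sU /sV; lra.
Qed.
Unset Implicit Arguments. Set Strict Implicit.

Lemma neg_flip (R : realType) (A B : set R) (F G : R -> R -> \bar R) (v : \bar R) :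
  is_maxmin A B F v -> (forall x y, G x y = (- F y x)%E) -> is_minmax A B G (- v)%E.
Proof.
move=> [g [h1 [[b0 Ab0 e] h2]]] hG.
exists (fun x => - g x)%E; split.
  move=> a Aa; case: (h1 a Aa) => [[x Bx ex] hx]; split.
    by exists x => //; rewrite hG ex.
  by move=> y By; rewrite hG leeN2 (hx _ By).
split; first by exists b0 => //; rewrite e.
by move=> a Aa; rewrite leeN2 h2.
Qed.

Theorem lemma3p13 (d : measure_display) (T : measurableType d) (R : realType)
  (PP : set (probability T R)) (X Y : T -> R) :
  PP !=set0 ->
  measurable_fun setT X -> measurable_fun setT Y ->
  (Ehat PP (fun w => (X w ^+ 2)%R) + Ehat PP (fun w => (Y w ^+ 2)%R) < +oo)%E ->
  let U := fun w => (X w + Y w) / 2 in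
  let V := fun w => (X w - Y w) / 2 in
  let F := fun a b => Ehat PP (fun w => (U w - a) ^+ 2 - (V w - b) ^+ 2) in
  let G := fun a b => (- Ehat PP (fun w => (- (U w - a) ^+ 2 + (V w - b) ^+ 2)%R))%E in
  (exists v, is_maxmin setT setT F v /\ is_maxmin (Mset PP V) (Mset PP U) F v) /\
  (exists v, is_minmax setT setT G v /\ is_minmax (Mset PP U) (Mset PP V) G v).
Proof.
move=> PP0 mX mY hfin U V F G.
have [p0 Pp0] := PP0.
have ub (W : T -> R) p : PP p -> ('E_p[W] <= Ehat PP W)%E.
  by move=> Pp; apply: ereal_sup_ubound; exists p.
have sqge0 (W : T -> R) p : (0 <= 'E_p[fun w => (W w ^+ 2)%R])%E.
  by apply: expectation_ge0 => x; apply: sqr_ge0.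
have Ege0 (W : T -> R) : (0 <= Ehat PP (fun w => (W w ^+ 2)%R))%E.
  exact: le_trans (sqge0 W p0) (ub _ _ Pp0).
have finX : Ehat PP (fun w => (X w ^+ 2)%R) \is a fin_num.
  rewrite ge0_fin_numE //; apply: le_lt_trans hfin; exact: leeDl.
have finY : Ehat PP (fun w => (Y w ^+ 2)%R) \is a fin_num.
  rewrite ge0_fin_numE //; apply: le_lt_trans hfin; rewrite addeC; exact: leeDl.
pose K := fine (Ehat PP (fun w => (X w ^+ 2)%R)) + fine (Ehat PP (fun w => (Y w ^+ 2)%R)).
have hK : (Ehat PP (fun w => (X w ^+ 2)%R) + Ehat PP (fun w => (Y w ^+ 2)%R) = K%:E)%E.
  by rewrite EFinD !fineK.
have fin2 (W : T -> R) p : PP p -> Ehat PP (fun w => (W w ^+ 2)%R) \is a fin_num ->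
    ('E_p[fun w => (W w ^+ 2)%R] < +oo)%E.
  move=> Pp hW; apply: le_lt_trans (ub _ _ Pp) _.
  by rewrite -(fineK hW) ltry.
have mU : measurable_fun setT U.
  by apply: measurable_funM => //; apply: measurable_funD.
have mV : measurable_fun setT V.
  by apply: measurable_funM => //; apply: measurable_funB.
have bnd (W : T -> R) : measurable_fun setT W ->
    (forall w, W w ^+ 2 <= X w ^+ 2 + Y w ^+ 2) ->
    forall p, PP p -> ('E_p[fun w => (W w ^+ 2)%R] <= K%:E)%E.
  move=> mW hW p Pp.
  have [lx _] := sq_lfun mX (fin2 X p Pp finX).
  have [ly _] := sq_lfun mY (fin2 Y p Pp finY).
  apply: (@le_trans _ _ ('E_p[(fun w => (X w ^+ 2)%R) \+ (fun w => (Y w ^+ 2)%R)])%E).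
    apply: expectation_le.
    - exact: measurable_funX.
    - by apply: measurable_funD; exact: measurable_funX.
    - by move=> x; apply: sqr_ge0.
    - by move=> x /=; apply: addr_ge0; apply: sqr_ge0.
    - by apply: aeW => x; apply: hW.
  by rewrite expectationD // -hK; apply: leeD; apply: ub.
have hUb : forall p, PP p -> ('E_p[fun w => (U w ^+ 2)%R] <= K%:E)%E.
  apply: bnd => // w; rewrite /U.
  have := sqr_ge0 (X w - Y w); have := sqr_ge0 (X w); have := sqr_ge0 (Y w); nra.
have hVb : forall p, PP p -> ('E_p[fun w => (V w ^+ 2)%R] <= K%:E)%E.
  apply: bnd => // w; rewrite /V.
  have := sqr_ge0 (X w + Y w); have := sqr_ge0 (X w); have := sqr_ge0 (Y w); nra.
split.
  exact: (gen PP0 mU mV hUb hVb).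
have [v [h1 h2]] := gen PP0 mV mU hVb hUb.
have eG x y : G x y = (- Ehat PP (fun w => ((V w - y) ^+ 2 - (U w - x) ^+ 2)%R))%E.
  rewrite /G /=; congr (- Ehat PP _)%E; apply/funext => w; rewrite addrC.
  by [].
exists (- v)%E; split; [exact: neg_flip h1 eG | exact: neg_flip h2 eG].
Qed.
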